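(* Let $c\ge3$ be an integer, let $c'$ be the largest odd integer with $c'\le c$, and let $\mathcal{P}$ be a finite bias distribution. (1) If $E_p[f_{c',x}(p)]=0$ for all $1\le x\le(c'-1)/2$, then $\mathcal{P}$ is $c$-indistinguishable. (2) If $\mathcal{P}$ is $(c'-2)$-indistinguishable and $E_p[f_{c',x_0}(p)]=0$ for at least one $x_0$ with $1\le x_0\le c'-1$, then $\mathcal{P}$ is $c$-indistinguishable. In particular, $\mathcal{P}$ is $c$-indistinguishable if for each odd $\ell$ with $3\le\ell\le c'$ there exists $x_\ell$ with $1\le x_\ell\le\ell-1$ and $E_p[f_{\ell,x_\ell}(p)]=0$.
   Context: A finite bias distribution is a probability distribution $\mathcal{P}$ supported on a finite subset of $(0,1)$ that is symmetric: it outputs $a$ and $1-a$ with the same probability. $E_p$ is expectation over $p\sim\mathcal{P}$. $\sigma(p)=\sqrt{(1-p)/p}$; for integers $\ell\ge1$, $0\le x\le\ell$, $f_{\ell,x}(p)=p^x(1-p)^{\ell-x}(x\sigma(p)-(\ell-x)\sigma(1-p))$ and $R_{\ell,x}=\max\{0,E_p[f_{\ell,x}(p)]\}$. For a positive integer $c$, $\mathcal{P}$ is $c$-indistinguishable if $\sum_{x=1}^{\ell-1}\binom{\ell}{x}R_{\ell,x}=0$ for all $2\le\ell\le c$ (so every such distribution is $1$-indistinguishable). *)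

(* Defs.v *)
From HB Require Import structures.
From mathcomp Require Import all_boot all_order all_algebra.
From mathcomp Require Import reals.
Set Implicit Arguments. Unset Strict Implicit. Unset Printing Implicit Defensive.
Import Order.TTheory GRing.Theory Num.Theory.
Local Open Scope ring_scope.

Section Bias.
Variable R : realType.

Definition finite_bias_dist (s : seq R) (w : R -> R) : Prop :=
  [/\ uniq s,
      (forall a, a \in s -> 0 < a < 1),
      (forall a, a \in s -> 0 < w a),
      (forall a, a \in s -> (1 - a) \in s /\ w (1 - a) = w a)
    & \sum_(a <- s) w a = 1].

Definition Ep (s : seq R) (w : R -> R) (g : R -> R) : R :=
  \sum_(a <- s) w a * g a.

Definition sigma (p : R) : R := Num.sqrt ((1 - p) / p).

Definition f_lx (l x : nat) (p : R) : R :=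
  p ^+ x * (1 - p) ^+ (l - x) * (x%:R * sigma p - (l - x)%:R * sigma (1 - p)).

Definition R_lx (s : seq R) (w : R -> R) (l x : nat) : R :=
  Num.max 0 (Ep s w (f_lx l x)).

Definition indist (s : seq R) (w : R -> R) (c : nat) : Prop :=
  forall l : nat, (2 <= l <= c)%N ->
    \sum_(1 <= x < l) 'C(l, x)%:R * R_lx s w l x = 0.

End Bias.

Definition odd_floor (c : nat) : nat := if odd c then c else c.-1.

(* Main.v *)
Require Import Defs.
From HB Require Import structures.
From mathcomp Require Import all_boot all_order all_algebra.
From mathcomp Require Import reals.
From mathcomp Require Import zify ring lra.
Import Order.TTheory GRing.Theory Num.Theory.
Local Open Scope ring_scope.

Lemma key_sig (R : realType) (p : R) : 0 < p < 1 -> p * sigma p = (1 - p) * sigma (1 - p).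
Proof.
case/andP => p0 p1. have q0 : 0 < 1 - p by rewrite subr_gt0.
rewrite /sigma subKr.
have E : forall a b : R, 0 < a -> a * Num.sqrt b = Num.sqrt (a ^+ 2 * b).
  by move=> a b a0; rewrite sqrtrM ?sqr_ge0 // sqrtr_sqr ger0_norm ?ltW.
rewrite !E //.
congr (Num.sqrt _); field.
by apply/andP; split; rewrite gt_eqF.
Qed.

Lemma f_rec (R : realType) (l x : nat) (p : R) : 0 < p < 1 -> (x <= l)%N ->
  f_lx l x p = f_lx l.+1 x p + f_lx l.+1 x.+1 p.
Proof.
move=> hp hx; have k := @key_sig R p hp.
rewrite /f_lx subSn // subSS.
set u := sigma p; set v := sigma (1 - p); move: k; rewrite -/u -/v => k.
set n := (l - x)%N.
have -> : p ^+ x * (1 - p) ^+ n.+1 * (x%:R * u - n.+1%:R * v) +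
  p ^+ x.+1 * (1 - p) ^+ n * (x.+1%:R * u - n%:R * v) =
  p ^+ x * (1 - p) ^+ n * (x%:R * u - n%:R * v) + p ^+ x * (1 - p) ^+ n * (p * u - (1 - p) * v).
  by rewrite !exprS -(@natr1 R x) -(@natr1 R n); ring.
by rewrite k subrr mulr0 addr0.
Qed.

Lemma f_anti (R : realType) (l x : nat) (p : R) : (x <= l)%N ->
  f_lx l (l - x) (1 - p) = - f_lx l x p.
Proof.
move=> hx; rewrite /f_lx subKn // subKr.
rewrite natrB //; ring.
Qed.
Lemma Ep_rec {R : realType} {s : seq R} {w : R -> R} (l x : nat) :
  finite_bias_dist s w -> (x <= l)%N ->
  Ep s w (f_lx l x) = Ep s w (f_lx l.+1 x) + Ep s w (f_lx l.+1 x.+1).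
Proof.
case=> _ hs _ _ _ hx; rewrite /Ep -big_split /=.
apply: eq_big_seq => a ha; by rewrite -mulrDr (@f_rec R l x a (hs a ha) hx).
Qed.

Lemma Ep_anti {R : realType} {s : seq R} {w : R -> R} (l x : nat) :
  finite_bias_dist s w -> (x <= l)%N ->
  Ep s w (f_lx l (l - x)) = - Ep s w (f_lx l x).
Proof.
case=> hu hs _ hsym _ hx.
have hp : perm_eq s (map (fun a => 1 - a) s).
  apply: uniq_perm => //.
    by rewrite map_inj_uniq // => a b /(congr1 (fun t => 1 - t)); rewrite !subKr.
  move=> b; apply/idP/mapP.
    by move=> hb; exists (1 - b); [exact: (hsym b hb).1 | rewrite subKr].
  by case=> a ha ->; exact: (hsym a ha).1.
rewrite /Ep (perm_big _ hp) big_map -sumrN.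
apply: eq_big_seq => a ha; rewrite (hsym a ha).2.
by rewrite -{1}[a](subKr 1) f_anti // mulrN subKr.
Qed.
Definition V {R : realType} (s : seq R) (w : R -> R) (L : nat) : Prop :=
  forall x, (1 <= x)%N -> (x < L)%N -> Ep s w (f_lx L x) = 0.

Lemma V_down {R : realType} {s : seq R} {w : R -> R} (L : nat) :
  finite_bias_dist s w -> V s w L.+1 -> V s w L.
Proof.
move=> hd hV x h1 h2; rewrite (Ep_rec _ _ hd); last exact: ltnW.
rewrite (hV x h1 (ltn_trans h2 (ltnSn _))) (hV x.+1 isT h2); exact: addr0.
Qed.

Lemma V_down_all {R : realType} {s : seq R} {w : R -> R} (N : nat) :
  finite_bias_dist s w -> V s w N -> forall m, (m <= N)%N -> V s w m.
Proof.
move=> hd hV m hm; rewrite -(subKn hm).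
have : (N - m <= N)%N by exact: leq_subr.
elim: (N - m)%N => [|k IH] hk; first by rewrite subn0.
have hk' : (k <= N)%N by exact: ltnW.
apply: (V_down _ hd); rewrite subnSK //; exact: IH.
Qed.
Lemma V_alt {R : realType} {s : seq R} {w : R -> R} (L : nat) :
  finite_bias_dist s w -> V s w L -> forall k, (k.+1 <= L)%N ->
  Ep s w (f_lx L.+1 k.+1) = (-1) ^+ k * Ep s w (f_lx L.+1 1).
Proof.
move=> hd hV; elim=> [|k IH] hk; first by rewrite expr0 mul1r.
have h0 := hV k.+1 isT hk.
rewrite (Ep_rec _ _ hd) in h0; last exact: ltnW.
have -> : Ep s w (f_lx L.+1 k.+2) = - Ep s w (f_lx L.+1 k.+1).
  by apply/eqP; rewrite -addr_eq0 addrC h0.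
by rewrite IH ?(ltnW hk) // exprS mulN1r mulNr.
Qed.

Lemma V_up {R : realType} {s : seq R} {w : R -> R} (L : nat) :
  finite_bias_dist s w -> V s w L ->
  (exists x0, (1 <= x0 <= L)%N /\ Ep s w (f_lx L.+1 x0) = 0) -> V s w L.+1.
Proof.
move=> hd hV [x0 [/andP [h1 h2] h0]].
have e1 : Ep s w (f_lx L.+1 1) = 0.
  move: h0; rewrite -(prednK h1) (V_alt _ hd hV); last by rewrite prednK.
  by move/eqP; rewrite mulf_eq0 signr_eq0 /= => /eqP.
move=> x hx1 hx2; rewrite -(prednK hx1) (V_alt _ hd hV); last by rewrite prednK.
by rewrite e1 mulr0.
Qed.

Lemma V_odd {R : realType} {s : seq R} {w : R -> R} (k : nat) :
  finite_bias_dist s w -> V s w k.*2.+1 -> V s w k.*2.+2.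
Proof.
move=> hd hV; apply: (V_up _ hd hV); exists k.+1; split.
  by apply/andP; split; [done | rewrite -addnn; lia].
have := Ep_anti k.*2.+2 k.+1 hd.
have -> : (k.*2.+2 - k.+1)%N = k.+1 by rewrite -addnn; lia.
have hkk : (k < k.*2.+2)%N by rewrite -addnn; lia.
move=> /(_ hkk) /eqP; rewrite -subr_eq0 opprK -mulr2n mulrn_eq0 /=.
by move/eqP.
Qed.
Lemma sum_seq_eq0 {R : realType} (r : seq nat) (G : nat -> R) :
  (forall i, i \in r -> 0 <= G i) -> \sum_(i <- r) G i = 0 ->
  forall i, i \in r -> G i = 0.
Proof.
elim: r => [|a r IH] hG //.
rewrite big_cons => /eqP; rewrite paddr_eq0; last first.
- by rewrite big_seq; apply: sumr_ge0 => i hi; apply: hG; rewrite inE hi orbT.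
- by apply: hG; rewrite inE eqxx.
case/andP => /eqP ha /eqP hr i; rewrite inE => /orP [/eqP -> //|hi].
apply: IH => // j hj; apply: hG; rewrite inE hj orbT //.
Qed.

Lemma indist_V {R : realType} {s : seq R} {w : R -> R} (c : nat) :
  finite_bias_dist s w -> indist s w c -> forall l, (2 <= l <= c)%N -> V s w l.
Proof.
move=> hd hI l hl.
have hz : forall x, (1 <= x)%N -> (x < l)%N -> Ep s w (f_lx l x) <= 0.
  move=> x h1 h2.
  have H : 'C(l, x)%:R * R_lx s w l x = 0.
    apply: (sum_seq_eq0 (index_iota 1 l) (fun x => 'C(l, x)%:R * R_lx s w l x) _ (hI l hl)).
      move=> i _; apply: mulr_ge0; first exact: ler0n.
      by rewrite /R_lx le_max lexx.
    by rewrite mem_index_iota h1 h2.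
  move/eqP: H; rewrite mulf_eq0 pnatr_eq0 eqn0Ngt bin_gt0 (ltnW h2) /= => /eqP H.
  have : Ep s w (f_lx l x) <= R_lx s w l x by rewrite /R_lx le_max lexx orbT.
  by rewrite H.
move=> x h1 h2.
have e := Ep_anti l x hd (ltnW h2).
have a1 := hz x h1 h2.
have a2 := hz (l - x)%N ltac:(rewrite subn_gt0 //) ltac:(rewrite ltn_subrL; apply/andP; split => //; exact: leq_ltn_trans h2).
rewrite e in a2; apply/eqP; rewrite eq_le a1 /=; by rewrite -oppr_le0.
Qed.

Lemma V_indist {R : realType} {s : seq R} {w : R -> R} (c : nat) :
  (forall l, (2 <= l <= c)%N -> V s w l) -> indist s w c.
Proof.
move=> hV l hl; rewrite big1_seq // => x /andP [_ hx].
rewrite mem_index_iota in hx; case/andP: hx => h1 h2.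
by rewrite /R_lx (hV l hl x h1 h2) maxxx mulr0.
Qed.

Lemma finish {R : realType} {s : seq R} {w : R -> R} (c k : nat) :
  finite_bias_dist s w -> (c <= k.*2.+2)%N -> V s w k.*2.+1 -> indist s w c.
Proof.
move=> hd hc hV; apply: V_indist => l /andP [_ hl].
apply: (V_down_all _ hd (V_odd _ hd hV)); exact: leq_trans hc.
Qed.
Theorem proposition5 (R : realType) (c : nat) (s : seq R) (w : R -> R) :
  (3 <= c)%N -> finite_bias_dist s w ->
  let c' := odd_floor c in
  [/\ (* (1) *)
      ((forall x : nat, (1 <= x <= (c' - 1) %/ 2)%N -> Ep s w (f_lx c' x) = 0) ->
         indist s w c),
      (* (2) *)
      (indist s w (c' - 2) ->
       (exists x0 : nat, (1 <= x0 <= c' - 1)%N /\ Ep s w (f_lx c' x0) = 0) ->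
         indist s w c)
    & (* in particular *)
      ((forall l : nat, odd l -> (3 <= l <= c')%N ->
          exists xl : nat, (1 <= xl <= l - 1)%N /\ Ep s w (f_lx l xl) = 0) ->
         indist s w c)].
Proof.
move=> hc hd c'.
have hc' : [&& odd c', (c' <= c)%N & (c <= c'.+1)%N].
  rewrite /c' /odd_floor; case: ifP => ho; first by rewrite ho leqnn leqnSn.
  have hc0 : (0 < c)%N by apply: leq_trans hc.
  rewrite leq_pred prednK // leqnn !andbT.
  by move: ho; rewrite -{1}(prednK hc0) /= => /negbFE.
case/and3P: hc' => ho hle hge.
have [k hk] : exists k, c' = k.*2.+1.
  exists c'./2; have := odd_double_half c'; rewrite ho /= => e; by rewrite -[in LHS]e add1n.
clearbody c'; subst c'.
have hk1 : (1 <= k)%N by rewrite -addnn in hle hge *; lia.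
have hfin := finish c k hd hge.
split.
- move=> H; apply: hfin => x h1 h2.
  have hdiv : ((k.*2.+1 - 1) %/ 2)%N = k by rewrite subn1 /= -muln2 mulnK.
  rewrite hdiv in H.
  case: (leqP x k) => hxk; first by apply: H; rewrite h1 hxk.
  have hx : (x <= k.*2.+1)%N by exact: ltnW.
  have := Ep_anti k.*2.+1 (k.*2.+1 - x) hd (leq_subr _ _).
  rewrite subKn // => ->; rewrite H ?oppr0 //.
  by apply/andP; split; rewrite -addnn in h2 *; lia.
- move=> hI [x0 [hx0 h0]]; apply: hfin.
  have hV1 : V s w (k.-1).*2.+1.
    clear ho; case: k hk1 hI {hx0 h0 hle hge} => [//|[|k]] _ hI.
      by move=> x h1 h2; exfalso; rewrite /= in h2; lia.
    apply: (indist_V _ hd hI); rewrite /= -!addnn; lia.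
  have hV2 := V_odd _ hd hV1.
  have -> : k.*2.+1 = (k.-1).*2.+2.+1 by rewrite -!addnn; lia.
  apply: (V_up _ hd hV2); exists x0; split.
    by move: hx0; rewrite -!addnn; lia.
  by have -> : (k.-1).*2.+2.+1 = k.*2.+1 by rewrite -!addnn; lia.
- move=> H; apply: hfin.
  suff : forall j, (j <= k)%N -> V s w j.*2.+1 by apply.
  elim=> [|j IH] hj.
    by move=> x h1 h2; exfalso; rewrite /= in h2; lia.
  have hV2 := V_odd _ hd (IH (ltnW hj)).
  have -> : j.+1.*2.+1 = j.*2.+2.+1 by rewrite doubleS.
  apply: (V_up _ hd hV2).
  have [xl [hxl e]] := H j.*2.+3 ltac:(by rewrite /= odd_double) ltac:(rewrite -!addnn in hj *; lia).
  exists xl; split => //; by move: hxl; rewrite -!addnn; lia.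
Qed.
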